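(* Assume $m\ge2$. There exists $g(x)\in A$ with $M_x^T=M_g$ if and only if either $f(x)=x^m\pm1$, or $m=2$ and $f(x)=x^2+ax-1$ for some $a\in\mathbb{F}$.
   Context: Let $\mathbb{F}$ be a finite field, $f(x)=x^m+\sum_{i=0}^{m-1}f_ix^i\in\mathbb{F}[x]$ monic of degree $m$, and $A=\mathbb{F}[x]/\langle f(x)\rangle$, elements identified with polynomials of degree $<m$. $M_x$ is the $m\times m$ companion matrix of $f$: its $i$-th row is the unit vector $e_{i+1}$ for $1\le i\le m-1$ and its last row is $(-f_0,-f_1,\ldots,-f_{m-1})$. For $g(x)=\sum_{i=0}^{m-1}a_ix^i\in A$, $M_g=\sum_{i=0}^{m-1}a_iM_x^i$. $M^T$ denotes the transpose. *)

(* Defs.v *)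
From HB Require Import structures.
From mathcomp Require Import all_boot all_order all_algebra all_field.
Set Implicit Arguments. Unset Strict Implicit. Unset Printing Implicit Defensive.
Import GRing.Theory.
Local Open Scope ring_scope.

Definition companion_mx (F : fieldType) (m : nat) (f : {poly F}) : 'M[F]_m :=
  \matrix_(i < m, j < m)
    if (i.+1 < m)%N then ((j : nat) == i.+1)%:R else - f`_j.

(* M_g = sum_{i<m} a_i M_x^i for g = sum_{i<m} a_i x^i in A = F[x]/<f>. *)
Definition mult_mx (F : fieldType) (m : nat) (f g : {poly F}) : 'M[F]_m :=
  \sum_(i < m) g`_i *: (companion_mx m f) ^+ i.

(* Main.v *)
Require Import Defs.
From HB Require Import structures.
From mathcomp Require Import all_boot all_order all_algebra all_field.
From mathcomp Require Import ring zify.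
Import GRing.Theory.
Local Open Scope ring_scope.

Lemma monic_coefs (F : fieldType) m (f : {poly F}) :
  f \is monic -> size f = m.+1 -> f`_m = 1 /\ forall j, (m < j)%N -> f`_j = 0.
Proof.
move=> mf sf; split.
  by move/monicP: mf; rewrite /lead_coef sf.
move=> j hj; move: (leqnn (size f)); rewrite {2}sf => /leq_sizeP; exact.
Qed.

Lemma rowC (F : fieldType) m (f q : {poly F}) :
  f \is monic -> size f = m.+1 -> (size q <= m)%N ->
  poly_rV q *m companion_mx m f = poly_rV ((q * 'X) %% f) :> 'rV_m.
Proof.
move=> mf sf sq; have [fm fj] := @monic_coefs _ _ _ mf sf.
have key : (q * 'X) %% f = q * 'X - q`_m.-1 *: f.
  rewrite -{1}[q * 'X](addrNK (q`_m.-1 *: f)) addrC -mul_polyC.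
  rewrite modp_addl_mul_small // sf ltnS; apply/leq_sizeP => j hj.
  rewrite coefB coefMX coefCM; case: (ltngtP m j) hj => // [hmj|<-] _.
    rewrite fj // mulr0 subr0; case: j hmj => // j hmj /=.
    by move/leq_sizeP: sq; apply; rewrite -ltnS.
  rewrite fm mulr1; case: m sq {fm fj sf} => [|m] sq /=; last by rewrite subrr.
  by move: sq; rewrite leqn0 size_poly_eq0 => /eqP ->; rewrite coef0 subrr.
apply/rowP => j; rewrite !mxE key coefB coefMX coefZ.
case: m sq sf fj fm j key => [|m] sq sf fj fm j key; first by case: j.
rewrite big_ord_recr /= !mxE ltnn /= mulrN; congr (_ - _).
under eq_bigr => i _ do rewrite !mxE /= ltnS ltn_ord.
case: j => [[|j] hj] /=.
  by rewrite big1 // => i _; rewrite mulr0.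
rewrite (bigD1 (Ordinal (hj : (j < m)%N))) //= big1 ?eqxx ?mulr1 ?addr0 //.
move=> i /negbTE hi; rewrite eqSS.
by rewrite -(inj_eq val_inj) /= eq_sym in hi; rewrite hi mulr0.
Qed.

Lemma rowCk (F : fieldType) m (f q : {poly F}) k :
  f \is monic -> size f = m.+1 -> (size q <= m)%N ->
  poly_rV q *m (companion_mx m f) ^+ k = poly_rV ((q * 'X^k) %% f) :> 'rV_m.
Proof.
move=> mf sf sq; elim: k => [|k IH].
  by rewrite expr0 mulmx1 mulr1 modp_small // sf ltnS.
have fn0 : f != 0 by rewrite -size_poly_gt0 sf.
rewrite exprSr -mulmxE mulmxA IH rowC //; last by rewrite -ltnS -sf ltn_modp.
rewrite [(_ %% f) * 'X]mulrC modp_mul exprS mulrCA. reflexivity.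
Qed.

Lemma entryCk (F : fieldType) m (f : {poly F}) k (i j : 'I_m) :
  f \is monic -> size f = m.+1 ->
  ((companion_mx m f) ^+ k) i j = ('X^(i + k) %% f)`_j.
Proof.
move=> mf sf.
have -> : ((companion_mx m f) ^+ k) i j = (poly_rV ('X^i) *m (companion_mx m f) ^+ k) 0 j.
  have -> : poly_rV ('X^i) = delta_mx 0 i :> 'rV[F]_m.
    by apply/rowP => l; rewrite !mxE coefXn eqxx /=.
  by rewrite -(rowE i (companion_mx m f ^+ k)) mxE.
by rewrite rowCk // ?size_polyXn // exprD mxE.
Qed.

Lemma Xm_mod (F : fieldType) m (f : {poly F}) :
  f \is monic -> size f = m.+1 -> 'X^m %% f = 'X^m - f.
Proof.
move=> mf sf; have [fm fj] := @monic_coefs _ _ _ mf sf.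
rewrite -{1}['X^m](addrNK f) addrC -{1}(mul1r f) modp_addl_mul_small // sf ltnS.
apply/leq_sizeP => j hj; rewrite coefB coefXn.
case: (ltngtP m j) hj => // [hmj|<-] _; last by rewrite fm subrr.
by rewrite fj // subr0.
Qed.

Lemma mult_mxE (F : fieldType) m (f g : {poly F}) i j :
  mult_mx m f g i j = \sum_(k < m) g`_k * ((companion_mx m f) ^+ k) i j.
Proof. by rewrite /mult_mx summxE; apply: eq_bigr => k _; rewrite mxE. Qed.

Lemma CE (F : fieldType) m (f : {poly F}) (i j : 'I_m) :
  companion_mx m f i j = if (i.+1 < m)%N then ((j : nat) == i.+1)%:R else - f`_j.
Proof. by rewrite mxE. Qed.

Lemma forward (F : fieldType) n (f g : {poly F}) :
  f \is monic -> size f = n.+3 -> (size g <= n.+2)%N ->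
  (companion_mx n.+2 f)^T = mult_mx n.+2 f g ->
  (f = 'X^(n.+2) + 1 \/ f = 'X^(n.+2) - 1 \/
   (n.+2 = 2%N /\ exists a : F, f = 'X^2 + a *: 'X - 1)).
Proof.
move=> mf sf sg H.
have [fm fj] := @monic_coefs _ _ _ mf sf.
have E : forall i j : 'I_n.+2, companion_mx n.+2 f j i =
    \sum_(k < n.+2) g`_k * ('X^(i + k) %% f)`_j.
  move=> i j; have := congr1 (fun M : 'M[F]_(n.+2) => M i j) H; rewrite /= mxE mult_mxE => ->.
  by apply: eq_bigr => k _; rewrite entryCk.
have g0 : forall j : 'I_n.+2, g`_j = if (j.+1 < n.+2)%N then 0 else - f`_0.
  have hX : forall k : 'I_n.+2, 'X^k %% f = 'X^k.
    by move=> k; rewrite modp_small // size_polyXn sf ltnS ltn_ord.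
  move=> j; have := E ord0 j; rewrite CE /= => ->.
  rewrite (bigD1 j) //= big1 ?addr0.
    by rewrite add0n hX coefXn eqxx mulr1.
  move=> k hk; rewrite add0n hX coefXn.
  by rewrite -(inj_eq val_inj) /= in hk; rewrite eq_sym (negbTE hk) mulr0.
set c := - f`_0.
have gE : g = c *: 'X^(n.+1).
  apply/polyP => k; rewrite coefZ coefXn.
  case: (ltnP k n.+2) => hk.
    rewrite (g0 (Ordinal hk)) /=.
    case: (ltnP k.+1 n.+2) => h.
      have /negbTE-> : k != n.+1 by rewrite neq_ltn -ltnS h.
      by rewrite mulr0.
    have -> : k = n.+1 by lia.
    by rewrite eqxx mulr1.
  by rewrite nth_default ?(leq_trans sg) // gtn_eqF // mulr0.
have R1 : forall j : 'I_n.+2,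
    companion_mx n.+2 f j (Ordinal (isT : (1 < n.+2)%N)) = c * - f`_j.
  move=> j; rewrite E (bigD1 ord_max) //= big1 ?addr0.
    rewrite gE coefZ coefXn eqxx mulr1 add1n Xm_mod // coefB coefXn.
    by rewrite ltn_eqF // sub0r.
  move=> k hk; rewrite gE coefZ coefXn.
  rewrite -(inj_eq val_inj) /= in hk.
  by rewrite (negbTE hk) mulr0 mul0r.
have h0 : c * c = 1.
  by have := R1 ord0; rewrite CE /= => <-.
have cn0 : c != 0 by apply/eqP => c0; rewrite c0 mul0r in h0; move/eqP: h0; rewrite eq_sym oner_eq0.
have hmid : forall j : nat, (0 < j)%N -> (j < n.+1)%N -> f`_j = 0.
  move=> j j0 jn; have := R1 (Ordinal (ltn_trans jn (ltnSn _))).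
  rewrite CE /= ltnS jn eqSS; case: j j0 jn => // j _ jn /=.
  move/esym/eqP; rewrite mulf_eq0 (negbTE cn0) /= oppr_eq0 => /eqP; exact.
have hlast := R1 (Ordinal (ltnSn n.+1)); rewrite CE /= ltnn in hlast.
have hc : c = 1 \/ c = -1.
  have : (c - 1) * (c + 1) = 0 by rewrite -[RHS](subrr 1) -{3}h0; ring.
  move/eqP; rewrite mulf_eq0 subr_eq0 addr_eq0 => /orP[/eqP|/eqP]; by [left|right].
destruct n as [|n].
  have fE : f = 'X^2 + f`_1 *: 'X + (f`_0)%:P.
    apply/polyP => k; rewrite !coefD coefXn coefZ coefX coefC.
    case: k => [|[|[|k]]] /=; rewrite ?mulr0 ?mulr1 ?add0r ?addr0 ?fm //.
    by rewrite fj.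
  have : (c - 1) * f`_1 = 0 by rewrite mulrBl mul1r hlast; ring.
  move/eqP; rewrite mulf_eq0 subr_eq0 => /orP[/eqP c1|/eqP f10].
    right; right; split=> //; exists f`_1; rewrite {1}fE.
    have -> : f`_0 = -1 by rewrite -c1 /c opprK.
    by rewrite polyCN polyC1.
  rewrite fE f10 scale0r addr0.
  case: hc => hc; [right; left|left]; have -> : f`_0 = - c by rewrite /c opprK.
    by rewrite hc polyCN polyC1.
  by rewrite hc opprK polyC1.
have f1 : f`_1 = 0 by apply: hmid.
have fn1 : f`_n.+2 = 0.
  move: hlast; rewrite f1 oppr0 => /esym/eqP.
  by rewrite mulf_eq0 (negbTE cn0) oppr_eq0 => /eqP.
have fE : f = 'X^(n.+3) + (f`_0)%:P.
  apply/polyP => k; rewrite coefD coefXn coefC.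
  case: k => [|k] /=; first by rewrite add0r.
  rewrite addr0; case: (ltngtP k.+1 n.+3) => hk.
  - case: (ltnP k.+1 n.+2) => h; first by rewrite hmid.
    have -> : k.+1 = n.+2 by lia.
    by rewrite fn1.
  - by rewrite fj.
  - by rewrite hk fm.
case: hc => hc; [right; left|left]; rewrite fE; have -> : f`_0 = - c by rewrite /c opprK.
  by rewrite hc polyCN polyC1.
by rewrite hc opprK polyC1.
Qed.

Lemma conv_eps (F : fieldType) n (f : {poly F}) (e : F) :
  f \is monic -> size f = n.+2 -> e * e = 1 -> f = 'X^(n.+1) - e%:P ->
  exists g : {poly F}, (size g <= n.+1)%N /\
      (companion_mx n.+1 f)^T = mult_mx n.+1 f g.
Proof.
move=> mf sf ee fE.
have fc : forall k, f`_k = (k == n.+1)%:R - (if k == 0%N then e else 0).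
  by move=> k; rewrite fE coefB coefXn coefC.
exists (e *: 'X^n); split.
  by rewrite (leq_trans (size_scale_leq _ _)) // size_polyXn.
apply/matrixP => i j; rewrite mxE mult_mxE.
rewrite (bigD1 ord_max) //= big1 ?addr0; first last.
  move=> k hk; rewrite coefZ coefXn.
  by rewrite -(inj_eq val_inj) /= in hk; rewrite (negbTE hk) mulr0 mul0r.
rewrite coefZ coefXn eqxx mulr1 entryCk // CE.
case: i => [[|i] hi] /=.
  rewrite add0n modp_small ?size_polyXn ?sf // coefXn fc /=.
  case: (ltnP j.+1 n.+1) => h.
    have /negbTE-> : (j : nat) != n by rewrite neq_ltn -ltnS h.
    by rewrite mulr0.
  have -> : (j : nat) = n by apply/eqP; rewrite eqn_leq -ltnS ltn_ord -ltnS.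
  by rewrite eqxx mulr1 sub0r opprK.
have -> : 'X^(i.+1 + n) = 'X^i * f + e *: 'X^i.
  by rewrite fE mulrBr -exprD addSnnS -mul_polyC [e%:P * _]mulrC subrK.
rewrite modp_addl_mul_small; last first.
  by rewrite sf (leq_ltn_trans (size_scale_leq _ _)) // size_polyXn; lia.
rewrite coefZ coefXn mulrA ee mul1r fc eqSS.
case: (ltnP j.+1 n.+1) => h; first by rewrite eq_sym.
have -> : (j : nat) = n by have := ltn_ord j; lia.
have /negbTE-> : n != i by lia.
rewrite eqSS (_ : (i == n) = false); last by lia.
by rewrite /= subr0 oppr0.
Qed.

Lemma conv2 (F : fieldType) (f : {poly F}) (a : F) :
  f = 'X^2 + a *: 'X - 1 ->
  exists g : {poly F}, (size g <= 2)%N /\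
      (companion_mx 2 f)^T = mult_mx 2 f g.
Proof.
move=> fE; exists 'X; split; first by rewrite size_polyX.
apply/matrixP => i j; rewrite mxE mult_mxE.
rewrite (bigD1 (Ordinal (isT : (1 < 2)%N))) //= big1 ?addr0; first last.
  move=> k hk; rewrite coefX.
  by rewrite -(inj_eq val_inj) /= in hk; rewrite (negbTE hk) mul0r.
rewrite coefX eqxx mul1r expr1 !CE.
have f0 : f`_0 = -1 by rewrite fE coefB coefD coefXn coefZ coefX coefC /= mulr0 !add0r.
case: i => [[|[|i]] hi] //; case: j => [[|[|j]] hj] //=.
by rewrite f0 opprK.
by rewrite f0 opprK.
Qed.

Theorem mainTheorem12 (F : finFieldType) (m : nat) (f : {poly F}) :
  (2 <= m)%N -> f \is monic -> size f = m.+1 ->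
  (exists g : {poly F}, (size g <= m)%N /\
      (companion_mx m f)^T = mult_mx m f g)
  <->
  (f = 'X^m + 1 \/ f = 'X^m - 1 \/
   (m = 2%N /\ exists a : F, f = 'X^2 + a *: 'X - 1)).
Proof.
case: m => [|[|n]] // _ mf sf; split.
  by case=> g [sg H]; apply: forward mf sf sg H.
case=> [fE|[fE|[e2 [a fE]]]].
- apply: (@conv_eps _ _ _ (-1)) => //; first by rewrite mulrNN mulr1.
  by rewrite fE polyCN polyC1 opprK.
- apply: (@conv_eps _ _ _ 1) => //; first by rewrite mulr1.
- case: n e2 mf sf fE => // mf sf fE.
  by apply: conv2.
Qed.
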